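(* Let $Y\in\{0,1\}$, $T$, $H$ be random variables on a common probability space. For a random variable (or tuple) $X$, let $R^*(X):=\inf_g \Pr(g(X)\neq Y)$, the infimum over measurable $g$ with values in $\{0,1\}$. Then $$0\le R^*(T)-R^*(T,H)\le\sqrt{\tfrac12\,I(Y;H\mid T)},$$ where $I(Y;H\mid T)$ is the conditional mutual information between $Y$ and $H$ given $T$, measured in nats.
   Context: $R^*(T)$ and $R^*(T,H)$ are the Bayes-optimal 0–1 risks using the trace alone and the trace together with the history. *)

(* Defs.v *)
From HB Require Import structures.
From mathcomp Require Import all_boot all_order all_algebra.
From mathcomp Require Import all_classical all_reals all_analysis.
Set Implicit Arguments. Unset Strict Implicit. Unset Printing Implicit Defensive.
Import Order.TTheory GRing.Theory Num.Theory.
Local Open Scope classical_set_scope.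
Local Open Scope ring_scope.

Definition bayes_risk d (Om : measurableType d) (R : realType)
  (P : probability Om R) (Y : Om -> bool)
  dX (X : measurableType dX) (Xv : Om -> X) : \bar R :=
  ereal_inf [set P [set w | g (Xv w) != Y w] |
             g in [set g : X -> bool | measurable_fun setT g]].

Definition pr d (Om : measurableType d) (R : realType)
  (P : probability Om R) (S : set Om) : R := fine (P S).

Definition plogq (R : realType) (a b : R) : R :=
  if a == 0 then 0 else a * ln (a / b).

Definition is_mpartition dX (X : measurableType dX) (A : seq (set X)) : Prop :=
  (forall i, (i < size A)%N -> measurable (nth set0 A i)) /\
  (forall x, exists! i, (i < size A)%N /\ nth set0 A i x).

(* Mutual information (in nats) between the binary Y and the quantized
   observation [Xv in block] for a finite partition A. *)
Definition disc_MI d (Om : measurableType d) (R : realType)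
  (P : probability Om R) (Y : Om -> bool)
  dX (X : measurableType dX) (Xv : Om -> X) (A : seq (set X)) : R :=
  \sum_(y <- [:: false; true]) \sum_(B <- A)
     plogq (pr P ([set w | Y w = y] `&` (Xv @^-1` B)))
           (pr P [set w | Y w = y] * pr P (Xv @^-1` B)).

(* Mutual information I(Y;X) in nats for general random variables
   (Dobrushin/Gelfand-Yaglom-Perez definition: supremum over finite
   measurable partitions of the observation space). *)
Definition mutual_info d (Om : measurableType d) (R : realType)
  (P : probability Om R) (Y : Om -> bool)
  dX (X : measurableType dX) (Xv : Om -> X) : \bar R :=
  ereal_sup [set (disc_MI P Y Xv A)%:E | A in [set A | is_mpartition A]].

(* Conditional mutual information I(Y;H|T) := I(Y;(T,H)) - I(Y;T)
   (chain rule definition; both terms are <= ln 2 since Y is binary). *)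
Definition cond_mutual_info d (Om : measurableType d) (R : realType)
  (P : probability Om R) (Y : Om -> bool)
  dT (TT : measurableType dT) (T : Om -> TT)
  dH (HH : measurableType dH) (H : Om -> HH) : \bar R :=
  (mutual_info P Y (fun w => (T w, H w)) - mutual_info P Y T)%E.

(* Main.v *)
Require Import Defs.
From HB Require Import structures.
From mathcomp Require Import all_boot all_order all_algebra.
From mathcomp Require Import all_classical all_reals all_analysis.
From mathcomp Require Import ring lra zify.
Import Order.TTheory GRing.Theory Num.Theory.
Local Open Scope classical_set_scope.
Local Open Scope ring_scope.

Section P.
Variable R : realType.
Lemma dlog1m (x : R) : x < 1 -> is_derive x 1 (fun t : R => ln (1 - t)) (- (1 - x)^-1).
Proof.
move=> x1.
have h1 : is_derive x 1 (fun t : R => 1 - t) (-1).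
  have := @is_deriveB R R^o R^o (cst 1) id x 1 0 1 _ _.
  by rewrite sub0r; apply.
have h2 : is_derive (1 - x) 1 (@ln R) (1 - x)^-1 by apply: is_derive1_ln; lra.
have := @is_derive1_comp R (@ln R) (fun t => 1 - t) x _ _ h2 h1. by rewrite mulrN1.
Qed.

Lemma dsq (p x : R) : is_derive x 1 (fun t : R => 2 * ((p - t) * (p - t))) (4 * (x - p)).
Proof.
have h1 : is_derive x 1 (fun t : R => p - t) (-1).
  have := @is_deriveB R R^o R^o (cst p) id x 1 0 1 _ _.
  by rewrite sub0r; apply.
have h2 := is_deriveM h1 h1.
have h3 := @is_deriveZ R R^o R^o _ 2 x 1 _ h2.
apply: is_derive_eq h3 _.
rewrite /GRing.scale /=. ring.
Qed.

Lemma mono_mvt (G dG : R -> R) (a b : R) : a <= b ->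
  (forall x, a <= x <= b -> is_derive x 1 G (dG x)) ->
  (forall x, a < x < b -> 0 <= dG x) -> G a <= G b.
Proof.
move=> ab hd hs.
have [->|altb] := eqVneq a b; first by [].
have {}altb : a < b by rewrite lt_neqAle altb ab.
have [c] : exists2 c, c \in `]a, b[%R & G b - G a = dG c * (b - a).
  apply: (@MVT R G dG a b altb).
    move=> x; rewrite in_itv /= => /andP[h1 h2]; apply: hd.
    by rewrite !ltW.
  apply: derivable_within_continuous => x; rewrite in_itv /= => /hd h.
  exact: ex_derive.
rewrite in_itv /= => /hs hc0 e.
rewrite -subr_ge0 e; apply: mulr_ge0 => //; rewrite subr_ge0 //.
Qed.

Definition Gf (p : R) : R -> R := (- (fun t => p * ln t)) - (fun t => (1 - p) * ln (1 - t))
   - (fun t => 2 * ((p - t) * (p - t))).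

Lemma GfE (p t : R) : Gf p t = - (p * ln t) - (1 - p) * ln (1 - t) - 2 * ((p - t) * (p - t)).
Proof. by []. Qed.

Lemma dGf (p x : R) : 0 < x < 1 ->
  is_derive x 1 (Gf p) (- (p * x^-1) + (1 - p) * (1 - x)^-1 - 4 * (x - p)).
Proof.
move=> /andP[x0 x1].
have h1 : is_derive x 1 (fun t : R => p * ln t) (p * x^-1).
  apply: is_derive_eq (@is_deriveZ R R^o R^o _ p x 1 _ (is_derive1_ln x0)) _.
  by [].
have h2 : is_derive x 1 (fun t : R => (1 - p) * ln (1 - t)) ((1 - p) * - (1 - x)^-1).
  have := @is_deriveZ R R^o R^o _ (1 - p) x 1 _ (@dlog1m x x1).
  exact.
apply: is_derive_eq (is_deriveB (is_deriveB (is_deriveN h1) h2) (dsq p x)) _.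
ring.
Qed.

Lemma dG_sign (p c : R) : 0 < c < 1 ->
  - (p * c^-1) + (1 - p) * (1 - c)^-1 - 4 * (c - p)
  = (c - p) * ((1 - 2 * c) * (1 - 2 * c)) / (c * (1 - c)).
Proof. move=> /andP[c0 c1]; field; apply/andP; split; lra. Qed.

Lemma G_le (p q : R) : 0 < p < 1 -> 0 < q < 1 -> Gf p p <= Gf p q.
Proof.
move=> /andP[p0 p1] /andP[q0 q1].
have [pq|qp] := lerP p q.
  apply: (@mono_mvt (Gf p) (fun x => - (p * x^-1) + (1 - p) * (1 - x)^-1 - 4 * (x - p))) => //.
    move=> x /andP[h1 h2]; apply: dGf; apply/andP; split; lra.
  move=> x /andP[h1 h2]; rewrite dG_sign; last by apply/andP; split; lra.
  apply: divr_ge0; last by apply: mulr_ge0; lra.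
  apply: mulr_ge0; first lra.
  by rewrite -expr2 sqr_ge0.
rewrite -lerN2.
apply: (@mono_mvt (- Gf p) (fun x => - (- (p * x^-1) + (1 - p) * (1 - x)^-1 - 4 * (x - p)))) => //.
    exact: ltW.
  move=> x /andP[h1 h2]; apply: is_deriveN; apply: dGf; apply/andP; split; lra.
move=> x /andP[h1 h2]; rewrite dG_sign; last by apply/andP; split; lra.
rewrite oppr_ge0 mulrAC; apply: mulr_le0_ge0; last by rewrite -expr2 sqr_ge0.
apply: mulr_le0_ge0; first lra.
by rewrite invr_ge0; apply: mulr_ge0; lra.
Qed.

Lemma kl0 (q : R) : 0 < q < 1 -> 2 * (q * q) <= ln ((1 - q)^-1).
Proof.
move=> /andP[q0 q1].
pose F : R -> R := (- (fun t => ln (1 - t))) - (fun t => 2 * ((0 - t) * (0 - t))).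
have : F 0 <= F q.
  apply: (@mono_mvt F (fun x => - - (1 - x)^-1 - 4 * (x - 0))).
      exact: ltW.
    move=> x /andP[h1 h2].
    have hx1 : x < 1 by lra.
    exact: (is_deriveB (is_deriveN (@dlog1m x hx1)) (dsq 0 x)).
  move=> x /andP[h1 h2].
  have -> : - - (1 - x)^-1 - 4 * (x - 0) = ((1 - 2 * x) * (1 - 2 * x)) / (1 - x).
    by field; lra.
  apply: divr_ge0; last lra.
  by rewrite -expr2 sqr_ge0.
move=> h.
have hF : forall t, F t = - ln (1 - t) - 2 * ((0 - t) * (0 - t)) by [].
have e0 : ln (1 - 0) = 0 :> R by rewrite subr0 ln1.
have e1 : ln ((1 - q)^-1) = - ln (1 - q) by rewrite lnV // posrE; lra.
rewrite e1; move: h; rewrite !hF e0.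
have -> : (0 - q) * (0 - q) = q * q by ring.
have -> : (0 - 0) * (0 - 0) = 0 :> R by ring.
lra.
Qed.

Lemma kl_ge (p q : R) : 0 <= p <= 1 -> 0 < q < 1 ->
  2 * ((p - q) * (p - q)) <= p * ln (p / q) + (1 - p) * ln ((1 - p) / (1 - q)).
Proof.
move=> /andP[p0 p1] /andP[q0 q1].
have [->|pn0] := eqVneq p 0.
  rewrite mul0r add0r subr0 mul1r div1r.
  have h := @kl0 q ltac:(apply/andP; split; lra).
  nra.
have [->|pn1] := eqVneq p 1.
  rewrite subrr mul0r addr0 mul1r div1r.
  have h := @kl0 (1 - q) ltac:(apply/andP; split; lra).
  have e : 1 - (1 - q) = q by ring.
  rewrite e in h.
  nra.
have p0' : 0 < p by rewrite lt_neqAle eq_sym pn0 p0.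
have p1' : p < 1 by rewrite lt_neqAle pn1 p1.
have := @G_le p q ltac:(apply/andP; split; lra) ltac:(apply/andP; split; lra).
rewrite !GfE ln_div ?posrE // ln_div ?posrE; [|lra|lra].
rewrite subrr mul0r mulr0 subr0 => h.
have e : forall a b c : R, a * (b - c) = a * b - a * c by move=> *; ring.
rewrite !e. lra.
Qed.
End P.


Section Pure.
Variable R : realType.

Lemma plogqE (a b : R) : plogq a b = a * ln (a / b).
Proof. by rewrite /plogq; case: eqP => [->|//]; rewrite mul0r. Qed.

Lemma cell_core (s V u0 u1 v0 v1 : R) : s = u0 + u1 -> V = v0 + v1 ->
  0 <= u0 -> u0 <= v0 -> 0 <= u1 -> u1 <= v1 ->
  2 * ((u1 - s * (v1 / V)) ^+ 2 / s) <=
  u0 * ln (u0 / s / (v0 / V)) + u1 * ln (u1 / s / (v1 / V)).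
Proof.
move=> hs hV hu0 hu0v hu1 hu1v.
have [s0|spos] : s = 0 \/ 0 < s by lra.
  have u00 : u0 = 0 by lra.
  have u10 : u1 = 0 by lra.
  by rewrite s0 u00 u10 invr0 !mulr0 !mul0r addr0.
have Vpos : 0 < V by lra.
have [v10|v1pos] : v1 = 0 \/ 0 < v1 by lra.
  have u10 : u1 = 0 by lra.
  have -> : u0 / s / (v0 / V) = 1.
    rewrite hs hV u10 v10 !addr0 divff ?div1r ?invrK ?divff //; lra.
  by rewrite ln1 u10 v10 !mul0r !mulr0 subr0 expr0n /= mul0r mulr0 addr0.
have [v00|v0pos] : v0 = 0 \/ 0 < v0 by lra.
  have u00 : u0 = 0 by lra.
  have -> : u1 / s / (v1 / V) = 1.
    rewrite hs hV u00 v00 !add0r divff ?div1r ?invrK ?divff //; lra.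
  have -> : u1 - s * (v1 / V) = 0.
    rewrite hs hV u00 v00 !add0r divff ?mulr1 ?subrr //; lra.
  by rewrite ln1 u00 !mul0r !mulr0 expr0n /= mul0r mulr0 addr0.
pose p := u1 / s; pose q := v1 / V.
have hp : 0 <= p <= 1.
  apply/andP; split; first by apply: divr_ge0; lra.
  by rewrite /p ler_pdivrMr // mul1r; lra.
have hq : 0 < q < 1.
  apply/andP; split; first by apply: divr_gt0.
  by rewrite /q ltr_pdivrMr // mul1r; lra.
have e1 : u0 / s = 1 - p by rewrite /p hs; field; lra.
have e2 : v0 / V = 1 - q by rewrite /q hV; field; lra.
have hu1e : u1 = s * p by rewrite /p; field; lra.
have hu0e : u0 = s * (1 - p) by rewrite -e1; field; lra.
rewrite e1 e2 -/p -/q.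
rewrite hu0e hu1e.
have h := @kl_ge R p q hp hq.
have -> : 2 * ((s * p - s * q) ^+ 2 / s) = s * (2 * ((p - q) * (p - q))).
  by field; lra.
have -> : s * (1 - p) * ln ((1 - p) / (1 - q)) + s * p * ln (p / q) =
  s * (p * ln (p / q) + (1 - p) * ln ((1 - p) / (1 - q))) by ring.
by rewrite ler_wpM2l // ltW.
Qed.

Lemma cell_kl (p0 p1 u0 u1 v0 v1 : R) : 0 <= u0 -> u0 <= v0 -> 0 <= u1 -> u1 <= v1 ->
  v0 <= p0 -> v1 <= p1 ->
  2 * ((u1 - (u0 + u1) * (v1 / (v0 + v1))) ^+ 2 / (u0 + u1)) <=
  (plogq u0 (p0 * (u0 + u1)) - u0 * ln (v0 / (p0 * (v0 + v1)))) +
  (plogq u1 (p1 * (u0 + u1)) - u1 * ln (v1 / (p1 * (v0 + v1)))).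
Proof.
move=> hu0 hu0v hu1 hu1v hv0 hv1.
have tE : forall u v p, 0 <= u -> u <= v -> v <= p -> u <= u0 + u1 -> v <= v0 + v1 ->
    plogq u (p * (u0 + u1)) - u * ln (v / (p * (v0 + v1))) =
    u * ln (u / (u0 + u1) / (v / (v0 + v1))).
  move=> u v p h0 h1 h2 h3 h4; rewrite plogqE.
  have [->|upos] : u = 0 \/ 0 < u by lra.
    by rewrite !mul0r subrr.
  rewrite -mulrBr -ln_div; last first.
  - by rewrite posrE; apply: divr_gt0; [lra|apply: mulr_gt0; lra].
  - by rewrite posrE; apply: divr_gt0; [lra|apply: mulr_gt0; lra].
  congr (u * ln _); field.
  by rewrite !gt_eqF //; lra.
rewrite (tE u0 v0 p0) ?(tE u1 v1 p1); try lra; exact: cell_core.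
Qed.

Lemma cell_err (a0 a1 b0 b1 : R) : 0 <= a0 -> 0 <= a1 -> 0 <= b0 -> 0 <= b1 ->
  (if a0 + b0 < a1 + b1 then a0 + b0 else a1 + b1) - (a0 + b1) <=
  `|a1 - (a0 + a1) * ((a1 + b1) / (a0 + b0 + (a1 + b1)))| +
  `|b1 - (b0 + b1) * ((a1 + b1) / (a0 + b0 + (a1 + b1)))|.
Proof.
move=> h0 h1 h2 h3.
have [V0|Vpos] : a0 + b0 + (a1 + b1) = 0 \/ 0 < a0 + b0 + (a1 + b1) by lra.
  have [-> -> -> ->] : [/\ a0 = 0, a1 = 0, b0 = 0 & b1 = 0] by split; lra.
  by rewrite !addr0 ltxx subrr addr_ge0.
pose r := (a1 + b1) / (a0 + b0 + (a1 + b1)).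
have er : r * (a0 + b0 + (a1 + b1)) = a1 + b1 by rewrite /r; field; lra.
have eab : a1 - (a0 + a1) * r = - (b1 - (b0 + b1) * r).
  have -> : a1 - (a0 + a1) * r = (a1 + b1) - r * (a0 + b0 + (a1 + b1)) - (b1 - (b0 + b1) * r) by ring.
  by rewrite er subrr sub0r.
rewrite -/r eab normrN.
have hn1 : - (b1 - (b0 + b1) * r) <= `|b1 - (b0 + b1) * r| by rewrite -normrN ler_norm.
have hn2 : (b1 - (b0 + b1) * r) <= `|b1 - (b0 + b1) * r| by rewrite ler_norm.
case: ifPn => hlt.
  have hr : 1 <= 2 * r.
    by rewrite /r mulrA ler_pdivlMr // mul1r; lra.
  have k : (b0 + b1) * (1 - 2 * r) <= 0 by apply: mulr_ge0_le0; lra.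
  have e : a0 + b0 - (a0 + b1) = (b0 + b1) * (1 - 2 * r) - 2 * (b1 - (b0 + b1) * r) by ring.
  rewrite e; lra.
rewrite -leNgt in hlt.
have hr : 2 * r <= 1.
  by rewrite /r mulrA ler_pdivrMr // mul1r; lra.
have k : (a0 + a1) * (2 * r - 1) <= 0 by apply: mulr_ge0_le0; lra.
have e : a1 + b1 - (a0 + b1) = (a0 + a1) * (2 * r - 1) + 2 * (a1 - (a0 + a1) * r) by ring.
rewrite e eab; lra.
Qed.

Lemma sum_lin n (f g h : 'I_n -> R) (c d : R) :
  \sum_(i < n) (f i + c * g i + d * h i) = \sum_(i < n) f i + c * \sum_(i < n) g i + d * \sum_(i < n) h i.
Proof. by rewrite !big_split /= -!mulr_sumr. Qed.

Lemma jensen2 n (s1 s2 e1 e2 : 'I_n -> R) :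
  (forall i, 0 <= s1 i) -> (forall i, 0 <= s2 i) ->
  (forall i, s1 i = 0 -> e1 i = 0) -> (forall i, s2 i = 0 -> e2 i = 0) ->
  \sum_(i < n) (s1 i + s2 i) <= 1 ->
  (\sum_(i < n) (`|e1 i| + `|e2 i|)) ^+ 2 <= \sum_(i < n) (e1 i ^+ 2 / s1 i + e2 i ^+ 2 / s2 i).
Proof.
move=> hs1 hs2 he1 he2 hW.
set M := \sum_(i < n) (`|e1 i| + `|e2 i|).
have term : forall s e : R, 0 <= s -> (s = 0 -> e = 0) ->
    (`|e| - M * s) ^+ 2 / s = e ^+ 2 / s + (-2 * M) * `|e| + M ^+ 2 * s.
  move=> s e h0 h1.
  have [s0|spos] : s = 0 \/ 0 < s by lra.
    by rewrite (h1 s0) s0 normr0 !mulr0 subr0 invr0 !mulr0 !addr0.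
  rewrite -[e ^+ 2](real_normK (num_real e)).
  by field; rewrite gt_eqF.
have h : 0 <= \sum_(i < n) ((`|e1 i| - M * s1 i) ^+ 2 / s1 i + (`|e2 i| - M * s2 i) ^+ 2 / s2 i).
  apply: sumr_ge0 => i _; apply: addr_ge0; apply: divr_ge0; rewrite ?sqr_ge0 //.
have E : forall i, (`|e1 i| - M * s1 i) ^+ 2 / s1 i + (`|e2 i| - M * s2 i) ^+ 2 / s2 i =
   (e1 i ^+ 2 / s1 i + e2 i ^+ 2 / s2 i) + (-2 * M) * (`|e1 i| + `|e2 i|) + M ^+ 2 * (s1 i + s2 i).
  by move=> i; rewrite (term _ _ (hs1 i) (he1 i)) (term _ _ (hs2 i) (he2 i)); ring.
rewrite (eq_bigr _ (fun i _ => E i)) sum_lin -/M in h.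
have hM : M ^+ 2 * \sum_(i < n) (s1 i + s2 i) <= M ^+ 2 * 1 by rewrite ler_wpM2l ?sqr_ge0.
rewrite mulr1 in hM.
move: h hM; set Q := \sum_(i < n) _; set W := \sum_(i < n) _.
rewrite expr2; nra.
Qed.

Lemma assemble n (a0 a1 b0 b1 : 'I_n -> R) (p0 p1 : R) :
  (forall i, 0 <= a0 i) -> (forall i, 0 <= a1 i) -> (forall i, 0 <= b0 i) -> (forall i, 0 <= b1 i) ->
  (forall i, a0 i + b0 i <= p0) -> (forall i, a1 i + b1 i <= p1) ->
  \sum_(i < n) (a0 i + b0 i + (a1 i + b1 i)) <= 1 ->
  0 <= \sum_(i < n) ((if a0 i + b0 i < a1 i + b1 i then a0 i + b0 i else a1 i + b1 i) - (a0 i + b1 i)) ->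
  2 * (\sum_(i < n) ((if a0 i + b0 i < a1 i + b1 i then a0 i + b0 i else a1 i + b1 i) - (a0 i + b1 i))) ^+ 2 <=
  \sum_(i < n) (plogq (a0 i) (p0 * (a0 i + a1 i)) + plogq (b0 i) (p0 * (b0 i + b1 i))
     + plogq (a1 i) (p1 * (a0 i + a1 i)) + plogq (b1 i) (p1 * (b0 i + b1 i))
     - plogq (a0 i + b0 i) (p0 * (a0 i + b0 i + (a1 i + b1 i)))
     - plogq (a1 i + b1 i) (p1 * (a0 i + b0 i + (a1 i + b1 i)))).
Proof.
move=> ha0 ha1 hb0 hb1 hp0 hp1 hsum hR.
set Rs := \sum_(i < n) _.
pose V i := a0 i + b0 i + (a1 i + b1 i).
pose ea i := a1 i - (a0 i + a1 i) * ((a1 i + b1 i) / V i).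
pose eb i := b1 i - (b0 i + b1 i) * ((a1 i + b1 i) / V i).
have s1 : Rs <= \sum_(i < n) (`|ea i| + `|eb i|).
  by apply: ler_sum => i _; apply: cell_err.
have s2 : (\sum_(i < n) (`|ea i| + `|eb i|)) ^+ 2 <=
    \sum_(i < n) (ea i ^+ 2 / (a0 i + a1 i) + eb i ^+ 2 / (b0 i + b1 i)).
  apply: jensen2.
  - by move=> i; apply: addr_ge0.
  - by move=> i; apply: addr_ge0.
  - move=> i h; have a10 : a1 i = 0 by have := ha0 i; have := ha1 i; lra.
    by rewrite /ea h a10 mul0r subr0.
  - move=> i h; have b10 : b1 i = 0 by have := hb0 i; have := hb1 i; lra.
    by rewrite /eb h b10 mul0r subr0.
  - apply: le_trans hsum; rewrite le_eqVlt; apply/orP; left; apply/eqP.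
    by apply: eq_bigr => i _; ring.
have s3 : 2 * \sum_(i < n) (ea i ^+ 2 / (a0 i + a1 i) + eb i ^+ 2 / (b0 i + b1 i)) <=
    \sum_(i < n) (plogq (a0 i) (p0 * (a0 i + a1 i)) + plogq (b0 i) (p0 * (b0 i + b1 i))
     + plogq (a1 i) (p1 * (a0 i + a1 i)) + plogq (b1 i) (p1 * (b0 i + b1 i))
     - plogq (a0 i + b0 i) (p0 * (a0 i + b0 i + (a1 i + b1 i)))
     - plogq (a1 i + b1 i) (p1 * (a0 i + b0 i + (a1 i + b1 i)))).
  rewrite mulr_sumr; apply: ler_sum => i _.
  have ka := @cell_kl p0 p1 (a0 i) (a1 i) (a0 i + b0 i) (a1 i + b1 i) (ha0 i)
    ltac:(have := hb0 i; lra) (ha1 i) ltac:(have := hb1 i; lra) (hp0 i) (hp1 i).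
  have kb := @cell_kl p0 p1 (b0 i) (b1 i) (a0 i + b0 i) (a1 i + b1 i) (hb0 i)
    ltac:(have := ha0 i; lra) (hb1 i) ltac:(have := ha1 i; lra) (hp0 i) (hp1 i).
  rewrite [plogq (a0 i + b0 i) _]plogqE [plogq (a1 i + b1 i) _]plogqE.
  rewrite -/(V i) in ka kb *.
  rewrite -/(ea i) in ka; rewrite -/(eb i) in kb.
  move: ka kb.
  set L0 := ln ((a0 i + b0 i) / (p0 * V i)).
  set L1 := ln ((a1 i + b1 i) / (p1 * V i)).
  set A0 := plogq (a0 i) _; set A1 := plogq (a1 i) _.
  set B0 := plogq (b0 i) _; set B1 := plogq (b1 i) _.
  set X := ea i ^+ 2 / _; set Z := eb i ^+ 2 / _.
  nra.
have s4 : Rs ^+ 2 <= (\sum_(i < n) (`|ea i| + `|eb i|)) ^+ 2.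
  by rewrite !expr2; apply: ler_pM.
lra.
Qed.
End Pure.


Section Meas.
Context d (Om : measurableType d) (R : realType) (P : probability Om R).

Lemma pr_fin (S : set Om) : measurable S -> P S \is a fin_num.
Proof. by move=> mS; rewrite fin_num_measure. Qed.

Lemma prE (S : set Om) : measurable S -> P S = (pr P S)%:E.
Proof. by move=> mS; rewrite /pr fineK // pr_fin. Qed.

Lemma pr_ge0 (S : set Om) : 0 <= pr P S.
Proof. exact/fine_ge0/measure_ge0. Qed.

Lemma pr_le1 (S : set Om) : measurable S -> pr P S <= 1.
Proof. by move=> mS; rewrite -lee_fin -prE // probability_le1. Qed.

Lemma prU (A B : set Om) : measurable A -> measurable B -> A `&` B = set0 ->
  pr P (A `|` B) = pr P A + pr P B.
Proof.
move=> mA mB AB; apply: EFin_inj; rewrite EFinD -!prE //; last exact: measurableU.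
exact: measureU.
Qed.

Lemma pr_split (A E : set Om) : measurable A -> measurable E ->
  pr P A = pr P (A `&` E) + pr P (A `&` ~` E).
Proof.
move=> mA mE; rewrite -prU.
- by rewrite -setIUr setUCr setIT.
- exact: measurableI.
- by apply: measurableI => //; apply: measurableC.
- by rewrite setIACA setICr setI0.
Qed.

Lemma pr_mono (A B : set Om) : measurable A -> measurable B -> A `<=` B -> pr P A <= pr P B.
Proof.
move=> mA mB AB; rewrite (@pr_split B A mB mA) (_ : B `&` A = A); last exact/setIidr.
by rewrite lerDl pr_ge0.
Qed.

Lemma pr_setT : pr P setT = 1.
Proof. by rewrite /pr probability_setT. Qed.

Lemma pr_part dX (X : measurableType dX) (Xv : Om -> X) (A : seq (set X)) (S : set Om) :
  measurable_fun setT Xv -> is_mpartition A -> measurable S ->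
  \sum_(i < size A) pr P (S `&` Xv @^-1` nth set0 A i) = pr P S.
Proof.
move=> mX [mA uA] mS.
pose F (i : 'I_(size A)) := S `&` Xv @^-1` nth set0 A i.
have mF : forall i, measurable (F i).
  move=> i; apply: measurableI => //; rewrite -[Q in measurable Q]setTI.
  by apply: mX => //; apply: mA.
have tF : trivIset setT F.
  move=> i j _ _ [w [[_ hi] [_ hj]]].
  have [k [_ uk]] := uA (Xv w).
  apply: val_inj.
  by rewrite /= -(uk _ (conj (ltn_ord i) hi)) -(uk _ (conj (ltn_ord j) hj)).
have U : \big[setU/set0]_(i < size A) F i = S.
  apply/seteqP; split.
    apply: (big_ind (fun Z1 => Z1 `<=` S)) => //.
      by move=> Z1 Z2 hX hY w [/hX|/hY].
    by move=> i _ w [].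
  move=> w Sw; have [k [[hk hkw] _]] := uA (Xv w).
  by rewrite (bigD1 (Ordinal hk)) //=; left.
have h : P (\big[setU/set0]_(i < size A) F i) = \sum_(i < size A) P (F i).
  exact: measure_bigsetU_ord.
rewrite U in h.
apply: EFin_inj; rewrite -sumEFin -prE // h.
by apply: eq_bigr => i _; rewrite prE.
Qed.

Lemma sum_seq_nth dX (X : measurableType dX) (A : seq (set X)) (f : set X -> R) :
  \sum_(B <- A) f B = \sum_(i < size A) f (nth set0 A i).
Proof. by rewrite (big_nth set0) big_mkord. Qed.

Lemma mpre (f : Om -> bool) (B : set bool) : measurable_fun setT f -> measurable (f @^-1` B).
Proof. by move=> mf; rewrite -[Q in measurable Q]setTI; apply: mf. Qed.

Lemma m_neq (f h : Om -> bool) : measurable_fun setT f -> measurable_fun setT h ->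
  measurable [set w | f w != h w].
Proof.
move=> mf mh.
have -> : [set w | f w != h w] = (f @^-1` [set true] `&` h @^-1` [set false]) `|`
                                  (f @^-1` [set false] `&` h @^-1` [set true]).
  apply/seteqP; split=> w /=; case: (f w); case: (h w) => /= H;
  first [by left; split | by right; split | by case: H | by case: H => [[]|[]] | by [] ].
by apply: measurableU; apply: measurableI; apply: mpre.
Qed.

Variable Y : Om -> bool.
Hypothesis mY : measurable_fun setT Y.

Lemma mEy (y : bool) : measurable [set w | Y w = y].
Proof. exact: (@mpre Y [set y] mY). Qed.

Lemma prY (S : set Om) : measurable S ->
  pr P S = pr P ([set w | Y w = false] `&` S) + pr P ([set w | Y w = true] `&` S).
Proof.
move=> mS; rewrite (@pr_split S _ mS (mEy false)) setIC; congr (_ + _); congr pr.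
apply/seteqP; split => w /=.
  by case: (Y w) => -[Sw nb]; [split | exfalso; apply: nb].
by case: (Y w) => -[e Sw]; [split; [exact: Sw | by move=> []] | by case: e].
Qed.

Lemma bayes_lb dX (X : measurableType dX) (Xv : Om -> X) (g : X -> bool) :
  measurable_fun setT g -> (bayes_risk P Y Xv <= P [set w | g (Xv w) != Y w])%E.
Proof. by move=> mg; apply: ereal_inf_lbound; exists g. Qed.

Lemma bayes_ge0 dX (X : measurableType dX) (Xv : Om -> X) : (0 <= bayes_risk P Y Xv)%E.
Proof. by apply: le_ereal_inf_tmp => _ [g _ <-]; exact: measure_ge0. Qed.

Lemma bayes_fin dX (X : measurableType dX) (Xv : Om -> X) : bayes_risk P Y Xv \is a fin_num.
Proof.
rewrite ge0_fin_numE ?bayes_ge0 //.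
apply: (le_lt_trans (@bayes_lb _ _ Xv _ (measurable_cst false))).
apply: (le_lt_trans (probability_le1 _ _)); last by rewrite ltry.
exact: (@mpre Y [set b | false != b] mY).
Qed.

Lemma disc_MI_le dX (X : measurableType dX) (Xv : Om -> X) (A : seq (set X)) :
  measurable_fun setT Xv -> is_mpartition A -> disc_MI P Y Xv A <= 2.
Proof.
move=> mX hA; rewrite /disc_MI !big_cons big_nil addr0.
have h : forall y, \sum_(B <- A) plogq (pr P ([set w | Y w = y] `&` Xv @^-1` B))
     (pr P [set w | Y w = y] * pr P (Xv @^-1` B)) <= 1.
  move=> y; rewrite sum_seq_nth.
  have mB : forall i, (i < size A)%N -> measurable (Xv @^-1` nth set0 A i).
    move=> i hi; rewrite -[Q in measurable Q]setTI; apply: mX => //.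
    by case: hA => + _; apply.
  set p := pr P [set w | Y w = y].
  apply: (@le_trans _ _ (\sum_(i < size A) pr P ([set w | Y w = y] `&` Xv @^-1` nth set0 A i) / p)).
    apply: ler_sum => i _; rewrite plogqE.
    set a := pr P _; set q := pr P _.
    have a0 : 0 <= a := pr_ge0 _.
    have [->|apos] : a = 0 \/ 0 < a by lra.
      by rewrite !mul0r.
    have ap : a <= p by apply: pr_mono; [apply: measurableI; [exact: mEy|exact: mB]|exact: mEy|apply: subIsetl].
    have aq : a <= q by apply: pr_mono; [apply: measurableI; [exact: mEy|exact: mB]|exact: mB|apply: subIsetr].
    have pp : 0 < p by lra.
    have qp : 0 < q by lra.
    have hx : a / (p * q) <= p^-1.
      have -> : a / (p * q) = (a / q) * p^-1 by field; rewrite !gt_eqF.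
      rewrite -[Q in _ <= Q]mul1r; apply: ler_wpM2r; first by rewrite invr_ge0 ltW.
      by rewrite ler_pdivrMr // mul1r.
    have hpos : 0 < a / (p * q) by apply: divr_gt0 => //; apply: mulr_gt0.
    have hl : ln (a / (p * q)) <= p^-1 := ltW (lt_le_trans (ln_sublinear hpos) hx).
    by apply: ler_wpM2l.
  rewrite -mulr_suml (@pr_part _ _ Xv A _ mX hA (mEy y)) -/p.
  have [->|pp] : p = 0 \/ 0 < p by have := pr_ge0 [set w | Y w = y]; rewrite -/p; lra.
    by rewrite mul0r.
  by rewrite divff ?gt_eqF.
by have := h false; have := h true; lra.
Qed.

Lemma partT dX (X : measurableType dX) : is_mpartition [:: @setT X].
Proof.
split; first by move=> [|i] //= _; exact: measurableT.
move=> x; exists 0%N; split; first by split.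
move=> [|j] // [hj _]; by rewrite ltnS ltn0 in hj.
Qed.

Lemma MI_bounds dX (X : measurableType dX) (Xv : Om -> X) :
  measurable_fun setT Xv -> mutual_info P Y Xv \is a fin_num.
Proof.
move=> mX.
have h1 : ((disc_MI P Y Xv [:: setT])%:E <= mutual_info P Y Xv)%E.
  by apply: ereal_sup_ubound; exists [:: setT] => //; exact: partT.
have h2 : (mutual_info P Y Xv <= 2%:E)%E.
  by apply: ge_ereal_sup => _ [A hA <-]; rewrite lee_fin; exact: disc_MI_le.
by move: h1 h2; case: (mutual_info P Y Xv).
Qed.

End Meas.


Section Core.
Context d (Om : measurableType d) (R : realType) (P : probability Om R).
Variable Y : Om -> bool.
Hypothesis mY : measurable_fun setT Y.
Context dT (TT : measurableType dT) (T : Om -> TT) dH (HH : measurableType dH) (H : Om -> HH).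
Hypothesis mT : measurable_fun setT T.
Hypothesis mH : measurable_fun setT H.
Variable g : TT * HH -> bool.
Hypothesis mg : measurable_fun setT g.

Local Notation Z := (fun w => (T w, H w)).

Lemma mZ : measurable_fun setT Z.
Proof. exact: measurable_fun_pair. Qed.

Definition f1 (B : set TT) : set (TT * HH) := [set z | B z.1 /\ g z].
Definition f2 (B : set TT) : set (TT * HH) := [set z | B z.1 /\ ~ g z].
Definition Cp (A : seq (set TT)) := map f1 A ++ map f2 A.

Lemma mg1 (b : bool) : measurable (g @^-1` [set b]).
Proof. by rewrite -[Q in measurable Q]setTI; apply: mg. Qed.

Lemma mf1 B : measurable B -> measurable (f1 B).
Proof.
move=> mB; have -> : f1 B = (B `*` setT) `&` (g @^-1` [set true]).
  by apply/seteqP; split => z /=; [move=> [h1 h2]|move=> [[h1 _] h2]].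
by apply: measurableI; [apply: measurableX|exact: mg1].
Qed.

Lemma mf2 B : measurable B -> measurable (f2 B).
Proof.
move=> mB; have -> : f2 B = (B `*` setT) `&` (g @^-1` [set false]).
  apply/seteqP; split => z /=.
    move=> [h1 h2]; split; first by split.
    by apply/negbTE/negP.
  by move=> [[h1 _] h2]; split => //; rewrite h2.
by apply: measurableI; [apply: measurableX|exact: mg1].
Qed.

Lemma Cp_part A : is_mpartition A -> is_mpartition (Cp A).
Proof.
move=> [mA uA]; split.
  move=> i; rewrite size_cat !size_map nth_cat size_map => hi.
  case: ltnP => hin.
    by rewrite (nth_map set0) //; apply: mf1; exact: mA.
  rewrite (nth_map set0); last by lia.
  by apply: mf2; apply: mA; lia.
move=> [t h]; have [k [[hk hkt] uk]] := uA t.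
case hg : (g (t, h)).
  exists k; split.
    split; first by rewrite size_cat !size_map; lia.
    by rewrite nth_cat size_map hk (nth_map set0) //.
  move=> j; rewrite size_cat !size_map nth_cat size_map => -[hj].
  case: ltnP => hjn.
    by rewrite (nth_map set0) // => -[hjt _]; exact: uk.
  rewrite (nth_map set0); last by lia.
  by move=> [_ hng]; exfalso; apply: hng.
exists (size A + k)%N; split.
  split; first by rewrite size_cat !size_map; lia.
  rewrite nth_cat size_map ltnNge leq_addr /= addKn (nth_map set0) //.
  by split => //; rewrite hg.
move=> j; rewrite size_cat !size_map nth_cat size_map => -[hj].
case: ltnP => hjn.
  by rewrite (nth_map set0) // => -[_ hgt]; rewrite hg in hgt.
rewrite (nth_map set0); last by lia.
move=> [hjt _].
have hlt : (j - size A < size A)%N by lia.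
have := uk _ (conj hlt hjt).
lia.
Qed.


Definition pA (y : bool) (B : set TT) := pr P ([set w | Y w = y] `&` Z @^-1` f1 B).
Definition pB (y : bool) (B : set TT) := pr P ([set w | Y w = y] `&` Z @^-1` f2 B).

Lemma mTB B : measurable B -> measurable (T @^-1` B).
Proof. by move=> mB; rewrite -[Q in measurable Q]setTI; apply: mT. Qed.

Lemma mZ1 B : measurable B -> measurable (Z @^-1` f1 B).
Proof. by move=> mB; rewrite -[Q in measurable Q]setTI; apply: mZ => //; exact: mf1. Qed.

Lemma mZ2 B : measurable B -> measurable (Z @^-1` f2 B).
Proof. by move=> mB; rewrite -[Q in measurable Q]setTI; apply: mZ => //; exact: mf2. Qed.

Lemma mE : measurable [set w | g (T w, H w)].
Proof. exact: (@mpre _ _ (fun w => g (T w, H w)) [set true] (measurableT_comp mg mZ)). Qed.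

Lemma mEy' (y : bool) : measurable [set w | Y w = y].
Proof. exact: (@mEy _ _ Y mY y). Qed.

Lemma hv (y : bool) B : measurable B ->
  pr P ([set w | Y w = y] `&` T @^-1` B) = pA y B + pB y B.
Proof.
move=> mB.
rewrite (@pr_split _ _ _ P _ [set w | g (T w, H w)] _ mE); last first.
  by apply: measurableI; [exact: mEy'|exact: mTB].
rewrite /pA /pB /f1 /f2; congr (pr P _ + pr P _); apply/seteqP; split=> w /=; tauto.
Qed.

Lemma hsa B : measurable B -> pr P (Z @^-1` f1 B) = pA false B + pA true B.
Proof. by move=> mB; rewrite (@prY _ _ _ P Y mY _ (mZ1 B mB)). Qed.

Lemma hsb B : measurable B -> pr P (Z @^-1` f2 B) = pB false B + pB true B.
Proof. by move=> mB; rewrite (@prY _ _ _ P Y mY _ (mZ2 B mB)). Qed.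

Lemma hVB B : measurable B ->
  pr P (T @^-1` B) = (pA false B + pB false B) + (pA true B + pB true B).
Proof. by move=> mB; rewrite (@prY _ _ _ P Y mY _ (mTB B mB)) !hv. Qed.

Lemma merrg : measurable [set w | g (T w, H w) != Y w].
Proof. exact: (@m_neq _ _ (fun w => g (T w, H w)) Y (measurableT_comp mg mZ) mY). Qed.

Lemma herr B : measurable B ->
  pr P ([set w | g (T w, H w) != Y w] `&` T @^-1` B) = pA false B + pB true B.
Proof.
move=> mB; rewrite /pA /pB -prU.
- rewrite /f1 /f2; congr pr; apply/seteqP; split => w /=.
    move=> [ne hB]; move: ne; case: (Y w); case: (g (T w, H w)) => //= _.
      by right; split => //; split.
    by left; split => //; split.
  case=> [[ey [hB hg]]|[ey [hB hng]]]; split => //.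
    by rewrite ey hg.
  by rewrite ey; move: hng; case: (g (T w, H w)).
- by apply: measurableI; [exact: mEy'|exact: mZ1].
- by apply: measurableI; [exact: mEy'|exact: mZ2].
- by apply/seteqP; split => [w [[/= e1 _] [/= e2 _]]|//]; rewrite e1 in e2.
Qed.

Lemma bayes_T_le A : is_mpartition A ->
  fine (bayes_risk P Y T) <= \sum_(i < size A)
    (if pr P ([set w | Y w = false] `&` T @^-1` nth set0 A i) <
        pr P ([set w | Y w = true] `&` T @^-1` nth set0 A i)
     then pr P ([set w | Y w = false] `&` T @^-1` nth set0 A i)
     else pr P ([set w | Y w = true] `&` T @^-1` nth set0 A i)).
Proof.
move=> hA; have [mA uA] := hA.
pose c k := pr P ([set w | Y w = false] `&` T @^-1` nth set0 A k) <
            pr P ([set w | Y w = true] `&` T @^-1` nth set0 A k).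
pose gA := fun t : TT => `[< exists k, [/\ (k < size A)%N, nth set0 A k t & c k] >].
have gAE : forall k t, (k < size A)%N -> nth set0 A k t -> gA t = c k.
  move=> k t hk ht; rewrite /gA; case hc : (c k).
    by apply/asboolP; exists k; split.
  apply/negbTE/asboolPn => -[j [hj hjt hcj]].
  have [k' [_ uk']] := uA t.
  have e1 := uk' _ (conj hk ht); have e2 := uk' _ (conj hj hjt).
  by move: hcj; rewrite -e2 e1 hc.
have mgA : measurable_fun setT gA.
  apply: (measurable_fun_bool true); rewrite setTI.
  have -> : gA @^-1` [set true] = \bigcup_(k in [set k | (k < size A)%N /\ c k]) nth set0 A k.
    apply/seteqP; split => t /=.
      by move/asboolP => [k [hk ht hc]]; exists k.
    by move=> [k [hk hc] ht]; apply/asboolP; exists k.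
  by apply: bigcup_measurable => k [hk _]; exact: mA.
have merr : measurable [set w | gA (T w) != Y w].
  exact: (@m_neq _ _ (fun w => gA (T w)) Y (measurableT_comp mgA mT) mY).
have hle := @bayes_lb _ _ _ P Y _ _ T gA mgA.
rewrite (@prE _ _ _ P _ merr) in hle.
apply: (@le_trans _ _ (pr P [set w | gA (T w) != Y w])).
  by rewrite -lee_fin fineK // (@bayes_fin _ _ _ P Y mY _ _ T).
rewrite -(@pr_part _ _ _ P _ _ T A _ mT hA merr).
apply: ler_sum => i _.
have hB : forall w, nth set0 A i (T w) -> gA (T w) = c i.
  by move=> w hw; apply: gAE.
rewrite -/(c i); case: ifP => hc.
  suff -> : [set w | gA (T w) != Y w] `&` T @^-1` nth set0 A i =
            [set w | Y w = false] `&` T @^-1` nth set0 A i by [].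
  apply/seteqP; split => w /= [h1 h2]; split => //.
    by move: h1; rewrite (hB w h2) hc; case: (Y w).
  by rewrite (hB w h2) hc h1.
suff -> : [set w | gA (T w) != Y w] `&` T @^-1` nth set0 A i =
          [set w | Y w = true] `&` T @^-1` nth set0 A i by [].
apply/seteqP; split => w /= [h1 h2]; split => //.
  by move: h1; rewrite (hB w h2) hc; case: (Y w).
by rewrite (hB w h2) hc h1.
Qed.

Lemma core A : is_mpartition A ->
  pr P [set w | g (T w, H w) != Y w] <= fine (bayes_risk P Y T) ->
  2 * (fine (bayes_risk P Y T) - pr P [set w | g (T w, H w) != Y w]) ^+ 2 + disc_MI P Y T A
  <= disc_MI P Y Z (Cp A).
Proof.
move=> hA; have [mA _] := hA.
set a := fine _ ; set r := pr P _ => hra.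
have mBi : forall i : 'I_(size A), measurable (nth set0 A i) by move=> i; apply: mA.
have eZ : disc_MI P Y Z (Cp A) = \sum_(i < size A)
   (plogq (pA false (nth set0 A i)) (pr P [set w | Y w = false] * (pA false (nth set0 A i) + pA true (nth set0 A i)))
  + plogq (pB false (nth set0 A i)) (pr P [set w | Y w = false] * (pB false (nth set0 A i) + pB true (nth set0 A i)))
  + plogq (pA true (nth set0 A i)) (pr P [set w | Y w = true] * (pA false (nth set0 A i) + pA true (nth set0 A i)))
  + plogq (pB true (nth set0 A i)) (pr P [set w | Y w = true] * (pB false (nth set0 A i) + pB true (nth set0 A i)))).
  rewrite /disc_MI !big_cons big_nil addr0 /Cp !big_cat /= !big_map !sum_seq_nth.
  rewrite -!big_split /=; apply: eq_bigr => i _.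
  rewrite (hsa _ (mBi i)) (hsb _ (mBi i)) /pA /pB; ring.
have eT : disc_MI P Y T A = \sum_(i < size A)
  (plogq (pA false (nth set0 A i) + pB false (nth set0 A i))
     (pr P [set w | Y w = false] * ((pA false (nth set0 A i) + pB false (nth set0 A i)) + (pA true (nth set0 A i) + pB true (nth set0 A i))))
 + plogq (pA true (nth set0 A i) + pB true (nth set0 A i))
     (pr P [set w | Y w = true] * ((pA false (nth set0 A i) + pB false (nth set0 A i)) + (pA true (nth set0 A i) + pB true (nth set0 A i))))).
  rewrite /disc_MI !big_cons big_nil addr0 !sum_seq_nth -big_split /=; apply: eq_bigr => i _.
  by rewrite (hVB _ (mBi i)) !(hv _ _ (mBi i)).
have eR : r = \sum_(i < size A) (pA false (nth set0 A i) + pB true (nth set0 A i)).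
  rewrite /r -(@pr_part _ _ _ P _ _ T A _ mT hA merrg).
  by apply: eq_bigr => i _; exact: herr.
have eA : a <= \sum_(i < size A)
   (if pA false (nth set0 A i) + pB false (nth set0 A i) < pA true (nth set0 A i) + pB true (nth set0 A i)
    then pA false (nth set0 A i) + pB false (nth set0 A i)
    else pA true (nth set0 A i) + pB true (nth set0 A i)).
  apply: le_trans (bayes_T_le _ hA) _.
  by apply: ler_sum => i _; rewrite !(hv _ _ (mBi i)).
have h0A : forall (i : 'I_(size A)) y, 0 <= pA y (nth set0 A i) by move=> *; exact: pr_ge0.
have h0B : forall (i : 'I_(size A)) y, 0 <= pB y (nth set0 A i) by move=> *; exact: pr_ge0.
have hp : forall (i : 'I_(size A)) y, pA y (nth set0 A i) + pB y (nth set0 A i) <= pr P [set w | Y w = y].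
  move=> i y; rewrite -(hv _ _ (mBi i)); apply: pr_mono.
  - by apply: measurableI; [exact: mEy'|exact: mTB].
  - exact: mEy'.
  - exact: subIsetl.
have hsum : \sum_(i < size A) (pA false (nth set0 A i) + pB false (nth set0 A i) +
    (pA true (nth set0 A i) + pB true (nth set0 A i))) <= 1.
  rewrite -(@pr_setT _ _ _ P) -(@pr_part _ _ _ P _ _ T A setT mT hA measurableT).
  rewrite le_eqVlt; apply/orP; left; apply/eqP; apply: eq_bigr => i _.
  by rewrite setTI (hVB _ (mBi i)).
have hRs : 0 <= \sum_(i < size A)
   ((if pA false (nth set0 A i) + pB false (nth set0 A i) < pA true (nth set0 A i) + pB true (nth set0 A i)
    then pA false (nth set0 A i) + pB false (nth set0 A i)
    else pA true (nth set0 A i) + pB true (nth set0 A i)) - (pA false (nth set0 A i) + pB true (nth set0 A i))).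
  by rewrite sumrB -eR; lra.
have key := @assemble R (size A) (fun i => pA false (nth set0 A i)) (fun i => pA true (nth set0 A i))
  (fun i => pB false (nth set0 A i)) (fun i => pB true (nth set0 A i))
  (pr P [set w | Y w = false]) (pr P [set w | Y w = true])
  (fun i => h0A i false) (fun i => h0A i true) (fun i => h0B i false) (fun i => h0B i true)
  (fun i => hp i false) (fun i => hp i true) hsum hRs.
cbv beta in key.
move: key hRs; set Rs := (X in 2 * X ^+ 2 <= _) => key hRs.
have hRr : a - r <= Rs by rewrite /Rs sumrB -eR; lra.
have sq : (a - r) ^+ 2 <= Rs ^+ 2 by rewrite !expr2; apply: ler_pM; lra.
rewrite eZ eT.
suff : 2 * Rs ^+ 2 <= \sum_(i < size A)
   (plogq (pA false (nth set0 A i)) (pr P [set w | Y w = false] * (pA false (nth set0 A i) + pA true (nth set0 A i)))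
  + plogq (pB false (nth set0 A i)) (pr P [set w | Y w = false] * (pB false (nth set0 A i) + pB true (nth set0 A i)))
  + plogq (pA true (nth set0 A i)) (pr P [set w | Y w = true] * (pA false (nth set0 A i) + pA true (nth set0 A i)))
  + plogq (pB true (nth set0 A i)) (pr P [set w | Y w = true] * (pB false (nth set0 A i) + pB true (nth set0 A i))))
  - \sum_(i < size A)
  (plogq (pA false (nth set0 A i) + pB false (nth set0 A i))
     (pr P [set w | Y w = false] * ((pA false (nth set0 A i) + pB false (nth set0 A i)) + (pA true (nth set0 A i) + pB true (nth set0 A i))))
 + plogq (pA true (nth set0 A i) + pB true (nth set0 A i))
     (pr P [set w | Y w = true] * ((pA false (nth set0 A i) + pB false (nth set0 A i)) + (pA true (nth set0 A i) + pB true (nth set0 A i))))).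
  by lra.
apply: (le_trans key); rewrite -sumrB le_eqVlt; apply/orP; left; apply/eqP.
by apply: eq_bigr => i _; ring.
Qed.

End Core.


Theorem mainTheorem4 (d : measure_display) (Om : measurableType d)
  (R : realType) (P : probability Om R)
  (Y : Om -> bool)
  (dT : measure_display) (TT : measurableType dT) (T : Om -> TT)
  (dH : measure_display) (HH : measurableType dH) (H : Om -> HH)
  (mY : measurable_fun setT Y) (mT : measurable_fun setT T)
  (mH : measurable_fun setT H) :
  let Ibar := cond_mutual_info P Y T H in
  let gap := (bayes_risk P Y T - bayes_risk P Y (fun w => (T w, H w)))%E in
  [/\ (0 <= gap)%E,
      Ibar \is a fin_num &
      (gap <= (Num.sqrt (fine Ibar / 2))%:E)%E].
Proof.
move=> Ibar gap; rewrite /Ibar /gap /cond_mutual_info.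
have mZ : measurable_fun setT (fun w => (T w, H w)) := measurable_fun_pair mT mH.
have fT := @bayes_fin _ _ _ P Y mY _ _ T.
have fZ := @bayes_fin _ _ _ P Y mY _ _ (fun w => (T w, H w)).
have fI0 := @MI_bounds _ _ _ P Y mY _ _ T mT.
have fI1 := @MI_bounds _ _ _ P Y mY _ _ _ mZ.
have claim : forall g0 : TT * HH -> bool, measurable_fun setT g0 ->
  pr P [set w | g0 (T w, H w) != Y w] <= fine (bayes_risk P Y T) ->
  fine (mutual_info P Y T) + 2 * (fine (bayes_risk P Y T) - pr P [set w | g0 (T w, H w) != Y w]) ^+ 2
   <= fine (mutual_info P Y (fun w => (T w, H w))).
  move=> g0 mg0 hr.
  have hs : (mutual_info P Y T <= (fine (mutual_info P Y (fun w => (T w, H w)))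
      - 2 * (fine (bayes_risk P Y T) - pr P [set w | g0 (T w, H w) != Y w]) ^+ 2)%:E)%E.
    apply: ge_ereal_sup => _ [A0 hA0 <-]; rewrite lee_fin.
    have hc := @core _ _ _ P Y mY _ _ T _ _ H mT mH g0 mg0 A0 hA0 hr.
    have hC : ((disc_MI P Y (fun w => (T w, H w)) (@Cp _ _ _ _ g0 A0))%:E <=
               mutual_info P Y (fun w => (T w, H w)))%E.
      apply: ereal_sup_ubound; exists (@Cp _ _ _ _ g0 A0) => //.
      exact: Cp_part.
    rewrite -(fineK fI1) lee_fin in hC.
    lra.
  move: hs; rewrite -(fineK fI0) lee_fin.
  lra.
have hba : fine (bayes_risk P Y (fun w => (T w, H w))) <= fine (bayes_risk P Y T).
  rewrite -lee_fin !fineK //.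
  apply: le_ereal_inf_tmp => _ [g0 mg0 <-].
  apply: ereal_inf_lbound; exists (fun z => g0 z.1) => //.
  exact: (measurableT_comp mg0 measurable_fst).
have adh : forall e, 0 < e ->
  exists2 g0 : TT * HH -> bool, measurable_fun setT g0 &
    pr P [set w | g0 (T w, H w) != Y w] < fine (bayes_risk P Y (fun w => (T w, H w))) + e.
  move=> e e0.
  have [x [g0 mg0 hx] hlt] : exists2 x,
      (exists2 g0 : TT * HH -> bool, measurable_fun setT g0 & P [set w | g0 (T w, H w) != Y w] = x)
      & (x < bayes_risk P Y (fun w => (T w, H w)) + e%:E)%E.
    exact: lb_ereal_inf_adherent e0 fZ.
  rewrite -hx in hlt.
  exists g0 => //.
  have merr := @m_neq _ _ (fun w => g0 (T w, H w)) Y (measurableT_comp mg0 mZ) mY.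
  rewrite (@prE _ _ _ P _ merr) -{1}(fineK fZ) -EFinD lte_fin in hlt.
  exact: hlt.
move: claim hba adh.
rewrite -(fineK fT) -(fineK fZ) -(fineK fI0) -(fineK fI1) -!EFinB /=.
set a := fine (bayes_risk P Y T).
set b := fine (bayes_risk P Y (fun w => (T w, H w))).
set i0 := fine (mutual_info P Y T).
set i1 := fine (mutual_info P Y (fun w => (T w, H w))).
move=> claim hba adh.
split.
- by rewrite lee_fin subr_ge0.
- by rewrite fin_numE.
rewrite lee_fin.
have [eab|hab] := eqVneq a b.
  by rewrite eab subrr sqrtr_ge0.
have dpos : 0 < a - b by rewrite subr_gt0 lt_neqAle eq_sym hab hba.
set dd := a - b in dpos *.
have K : forall e, 0 < e -> e < dd -> 2 * (dd - e) ^+ 2 <= i1 - i0.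
  move=> e e0 ed.
  have [g0 mg0 hlt] := adh e e0.
  set r := pr P _ in hlt.
  have hr : r <= a by rewrite /dd in ed; lra.
  have := claim g0 mg0 hr; rewrite -/r => hc.
  have h1 : 0 <= dd - e by lra.
  have h2 : dd - e <= a - r by rewrite /dd; lra.
  have : (dd - e) ^+ 2 <= (a - r) ^+ 2 by rewrite !expr2; apply: ler_pM.
  lra.
have K2 : 2 * dd ^+ 2 <= i1 - i0.
  apply/ler_addgt0Pr => x x0.
  have [hc|hc] := lerP (dd / 2) (x / (4 * dd)).
    have := K (dd / 2) ltac:(apply: divr_gt0; lra) ltac:(lra).
    have : 2 * dd ^+ 2 <= x.
      have := hc; rewrite ler_pdivlMr; last by lra.
      move=> h; nra.
    nra.
  have e0 : 0 < x / (4 * dd) by apply: divr_gt0; lra.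
  have := K (x / (4 * dd)) e0 ltac:(lra).
  have e4 : 4 * dd * (x / (4 * dd)) = x by field; lra.
  have := sqr_ge0 (x / (4 * dd)).
  nra.
have hK : 0 <= (i1 - i0) / 2 by have hsq := sqr_ge0 dd; apply: divr_ge0; lra.
rewrite -(ger0_norm (ltW dpos)) -sqrtr_sqr ler_sqrt //.
lra.
Qed.
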